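(* Let $q$ be a prime power and $n\ge 2$ an integer. The matroid $\widehat{\mathrm{PG}}(n-1,q)$ is $\mathrm{GF}(q)$-regular, i.e. it is representable over every field having $\mathrm{GF}(q)$ as a proper subfield.
   Context: Let $\mathbb F$ be a field with a $\mathrm{GF}(q)$-subfield, and let $B$ be a $\mathrm{GF}(q)$-matrix with $n+1$ rows whose columns (indexed by $E(N)$) represent $N\cong \mathrm{PG}(n,q)$. Let $L_0$ be a line of $N$ and $v\in\mathrm{col}_{\mathbb F}(B[L_0])$ a nonzero vector not parallel to any column of $B[L_0]$. Let $B^+$ be obtained from $B$ by appending a new column $e$ equal to $v$. Then $\widehat{\mathrm{PG}}(n-1,q)$ denotes any matroid isomorphic to the rank-$n$ matroid $\mathrm{si}(\tilde M(B^+)/e)$, where $\tilde M(B^+)$ is the matroid represented by the columns of $B^+$ and $\mathrm{si}$ denotes simplification; this is determined up to isomorphism by $n$ and $q$ (it is the principal extension of a line of $\mathrm{PG}(n,q)$ followed by contraction of the new element and simplification). *)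

(* Defs.v *)
From HB Require Import structures.
From mathcomp Require Import all_boot all_order all_algebra all_field.
Set Implicit Arguments. Unset Strict Implicit. Unset Printing Implicit Defensive.
Import GRing.Theory.
Local Open Scope ring_scope.

(* A "matroid" is given here by its independence predicate on subsets of a
   finite type; its ground set is a separate {set T} where relevant. *)

(** Independence in the vector matroid of a family g : T -> 'rV[F]_d:
    X is independent iff the vectors (g x)_{x in X} are linearly independent
    (in particular pairwise distinct). *)
Definition vec_indep (T : finType) (F : fieldType) (d : nat)
  (g : T -> 'rV[F]_d) (X : {set T}) : bool :=
  free [seq g x | x <- enum X].

(** Contraction M / e (for a loop e, contraction coincides with deletion). *)
Definition contract (T : finType) (indep : {set T} -> bool) (e : T)
  (X : {set T}) : bool :=
  if indep [set e] then (e \notin X) && indep (e |: X)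
  else (e \notin X) && indep X.

Definition is_loop (T : finType) (indep : {set T} -> bool) (x : T) : bool :=
  ~~ indep [set x].

Definition parallel (T : finType) (indep : {set T} -> bool) (x y : T) : bool :=
  [&& x != y, ~~ is_loop indep x, ~~ is_loop indep y & ~~ indep [set x; y]].

(** S is the ground set of a simplification of the matroid (E, indep):
    S contains exactly one element of each parallel class of non-loops
    (and no loops).  si(M) is (up to isomorphism) the restriction M|S. *)
Definition simplification_support (T : finType) (indep : {set T} -> bool)
  (E S : {set T}) : Prop :=
  [/\ S \subset E,
      forall x, x \in S -> ~~ is_loop indep x,
      forall x y, x \in S -> y \in S -> ~~ parallel indep x y &
      forall x, x \in E -> ~~ is_loop indep x ->
        exists2 y, y \in S & (x == y) || parallel indep x y].

Definition representable_on (K : fieldType) (T : finType)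
  (indep : {set T} -> bool) (S : {set T}) : Prop :=
  exists (d : nat) (h : T -> 'rV[K]_d),
    forall X : {set T}, X \subset S -> indep X = vec_indep h X.

Definition has_proper_subfield (Fq : finFieldType) (K : fieldType) : Prop :=
  exists (iotaK : {rmorphism Fq -> K}) (x : K), forall a : Fq, iotaK a != x.

(** The rows of B (indexed by 'I_m) represent PG(n,q) = PG(n, #|Fq|):
    they are nonzero, pairwise non-parallel, and every nonzero vector of
    Fq^(n+1) is parallel to one of them (one row per projective point). *)
Definition represents_PG (Fq : finFieldType) (n m : nat)
  (B : 'M[Fq]_(m, n.+1)) : Prop :=
  [/\ forall j, row j B != 0,
      forall i j, i != j -> ~~ (row i B == row j B)%MS &
      forall u : 'rV[Fq]_(n.+1), u != 0 -> exists j, (u == row j B)%MS].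

Definition is_line (Fq : finFieldType) (n m : nat) (B : 'M[Fq]_(m, n.+1))
  (L0 : {set 'I_m}) : Prop :=
  exists W : 'M[Fq]_(2, n.+1), \rank W = 2 /\
    L0 = [set j | (row j B <= W)%MS].

(** The vectors of B^+ over F: element [Some j] is row j of B (viewed in F),
    the new element e = [None] is v. *)
Definition Bplus (Fq : finFieldType) (F : fieldType) (iota : {rmorphism Fq -> F})
  (n m : nat) (B : 'M[Fq]_(m, n.+1)) (v : 'rV[F]_(n.+1)) (x : option 'I_m)
  : 'rV[F]_(n.+1) :=
  match x with
  | Some j => row j (map_mx iota B)
  | None => v
  end.

Definition PGhat_indep (Fq : finFieldType) (F : fieldType)
  (iota : {rmorphism Fq -> F}) (n m : nat) (B : 'M[Fq]_(m, n.+1))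
  (v : 'rV[F]_(n.+1)) : {set option 'I_m} -> bool :=
  contract (vec_indep (Bplus iota B v)) None.

Definition PGhat_ground (m : nat) : {set option 'I_m} :=
  [set Some j | j : 'I_m].

(* Main.v *)
Require Import Defs.
From HB Require Import structures.
From mathcomp Require Import all_boot all_order all_algebra all_field.
Import GRing.Theory.
Local Open Scope ring_scope.

Section All.
Set Implicit Arguments. Unset Strict Implicit. Unset Printing Implicit Defensive.
Section LA.
Variable L : fieldType.

Lemma rfP m N (A : 'M[L]_(m, N)) :
  reflect (forall y : 'rV_m, y *m A = 0 -> y = 0) (row_free A).
Proof.
apply: (iffP idP) => [rf y hy | H].
  by apply: (row_free_inj rf); rewrite hy mul0mx.
rewrite -kermx_eq0; apply/negPn/negP => /rowV0Pn [y /sub_kermxP hy ny].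
by move/eqP: ny; apply; apply: H.
Qed.

Definition mxs k N (s : seq 'rV[L]_N) : 'M[L]_(k, N) := \matrix_(i < k) s`_i.

Lemma span_mxs N (s : seq 'rV[L]_N) k (hk : size s = k) u :
  (u \in <<s>>)%VS = (u <= mxs k s)%MS.
Proof.
subst k; apply/idP/idP => [hu | /submxP [y ->]].
  have := coord_span (X := in_tuple s) hu => ->.
  apply: summx_sub => i _; apply: scalemx_sub.
  have -> : (in_tuple s)`_i = row i (mxs (size s) s) by rewrite rowK.
  exact: row_sub.
rewrite mulmx_sum_row; apply: memv_suml => i _; apply: memvZ.
rewrite rowK; apply: memv_span; exact: mem_nth.
Qed.

Lemma free_mxs N (s : seq 'rV[L]_N) k (hk : size s = k) :
  free s = row_free (mxs k s).
Proof.
subst k; apply/idP/idP => [/(freeP (X := in_tuple s)) H | /rfP H].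
  apply/rfP => y hy; apply/rowP => i; rewrite mxE.
  apply: (H (fun i => y 0 i)) => //.
  rewrite mulmx_sum_row in hy; rewrite -[RHS]hy.
  by apply: eq_bigr => j _; rewrite rowK.
suff : free (in_tuple s) by [].
apply/freeP => c hc i0.
have : \row_j c j = 0.
  apply: H; rewrite mulmx_sum_row -[RHS]hc; apply: eq_bigr => j _.
  by rewrite rowK mxE.
by move/rowP/(_ i0); rewrite !mxE.
Qed.

Lemma proj_free m N (A : 'M[L]_(m, N)) (u : 'rV[L]_N) : u != 0 ->
  row_free (A *m cokermx u) = ~~ (u <= A)%MS && row_free A.
Proof.
move=> nu; apply/idP/idP => [/rfP H | /andP [nuA /rfP H]].
  apply/andP; split.
    apply/negP => /submxP [y hy].
    have y0 : y = 0 by apply: H; rewrite mulmxA -hy mulmx_coker.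
    by move: nu; rewrite hy y0 mul0mx eqxx.
  by apply/rfP => y hy; apply: H; rewrite mulmxA hy mul0mx.
apply/rfP => y hy.
have : (y *m A <= u)%MS by rewrite submxE -mulmxA hy.
case/sub_rVP => a ha.
have [a0 | an0] := eqVneq a 0.
  by apply: H; rewrite ha a0 scale0r.
case/negP: nuA.
have -> : u = a^-1 *: (y *m A) by rewrite ha scalerA mulVf // scale1r.
by apply: scalemx_sub; exact: submxMl.
Qed.

End LA.
Lemma core (Fq : finFieldType) (L : fieldType) (iota : {rmorphism Fq -> L}) N
  (W : 'M[Fq]_(2, N)) (hW : \rank W = 2%N) (u : 'rV[L]_N) (hu : u != 0)
  (Hpar : forall r : 'rV[Fq]_N, r != 0 -> (r <= W)%MS -> ~~ (u <= map_mx iota r)%MS)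
  k (A : 'M[Fq]_(k, N)) :
  (u <= map_mx iota W)%MS -> (u <= map_mx iota A)%MS = (W <= A)%MS.
Proof.
move=> uW; apply/idP/idP => [uA | WA]; last first.
  by apply: submx_trans uW _; rewrite map_submx.
have : (u <= map_mx iota (A :&: W))%MS by rewrite map_capmx sub_capmx uA.
set C := (A :&: W)%MS => uC.
have CW : (C <= W)%MS by exact: capmxSr.
apply/negPn/negP => nWA.
have rC : (\rank C <= 1)%N.
  rewrite leqNgt; apply/negP => r2.
  have WC : (W <= C)%MS by rewrite -(geq_leqif (mxrank_leqif_sup CW)) hW.
  by case/negP: nWA; apply: submx_trans WC (capmxSl _ _).
have nC : C != 0.
  apply/negP => /eqP C0; move: uC; rewrite C0 map_mx0 submx0 => /eqP u0.
  by move: hu; rewrite u0 eqxx.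
case/rowV0Pn: nC => r rC' nr.
have Cr : (C <= r)%MS.
  by rewrite -(geq_leqif (mxrank_leqif_sup rC')) rank_rV nr.
case/negP: (Hpar r nr (submx_trans rC' CW)).
apply: submx_trans uC _; by rewrite map_submx.
Qed.
Section Mat.
Variables (Fq : finFieldType) (n m : nat) (B : 'M[Fq]_(m, n.+1)).

Definition rq (x : option 'I_m) : 'rV[Fq]_(n.+1) :=
  if x is Some j then row j B else 0.
Definition Mq (l : seq (option 'I_m)) : 'M[Fq]_(size l, n.+1) :=
  \matrix_(i < size l) rq (nth None l i).

Lemma mxs_map (L : fieldType) (iota : {rmorphism Fq -> L}) u l :
  None \notin l ->
  mxs (size l) (map (Bplus iota B u) l) = map_mx iota (Mq l).
Proof.
move=> nl; apply/row_matrixP => i; rewrite rowK -map_row rowK.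
rewrite (nth_map None) //.
case E: (nth None l i) => [j|] /=; first by rewrite map_row.
by move: nl; rewrite -E mem_nth.
Qed.

Lemma mxs_mul (L : fieldType) k N (s : seq 'rV[L]_N) (C : 'M[L]_N) :
  mxs k [seq w *m C | w <- s] = mxs k s *m C.
Proof.
apply/row_matrixP => i; rewrite row_mul !rowK.
case: (ltnP i (size s)) => hi; first by rewrite (nth_map 0).
by rewrite !nth_default ?size_map // mul0mx.
Qed.

Lemma indep_val (L : fieldType) (iota : {rmorphism Fq -> L}) u (X : {set option 'I_m}) :
  None \notin X ->
  vec_indep (Bplus iota B u) (None |: X) =
  ~~ (u <= map_mx iota (Mq (enum X)))%MS && row_free (map_mx iota (Mq (enum X))).
Proof.
move=> nX; rewrite /vec_indep.
have pe : perm_eq (enum (None |: X)) (None :: enum X).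
  apply: uniq_perm; rewrite ?enum_uniq //= ?mem_enum ?nX ?enum_uniq //.
  by move=> y; rewrite mem_enum in_setU1 in_cons mem_enum.
rewrite (perm_free (perm_map _ pe)) /= free_cons.
have nl : None \notin enum X by rewrite mem_enum.
have sz : size [seq Bplus iota B u x | x <- enum X] = size (enum X) by rewrite size_map.
by rewrite (span_mxs sz) (free_mxs sz) mxs_map.
Qed.

Lemma indep_proj (L : fieldType) (iota : {rmorphism Fq -> L}) u (X : {set option 'I_m}) :
  None \notin X -> u != 0 ->
  vec_indep (fun x => Bplus iota B u x *m cokermx u) X =
  ~~ (u <= map_mx iota (Mq (enum X)))%MS && row_free (map_mx iota (Mq (enum X))).
Proof.
move=> nX nu; rewrite /vec_indep.
have nl : None \notin enum X by rewrite mem_enum.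
have sz : size [seq Bplus iota B u x *m cokermx u | x <- enum X] = size (enum X)
  by rewrite size_map.
rewrite (free_mxs sz).
have -> : [seq Bplus iota B u x *m cokermx u | x <- enum X] =
  [seq w *m cokermx u | w <- [seq Bplus iota B u x | x <- enum X]] by rewrite -map_comp.
by rewrite mxs_mul mxs_map // proj_free.
Qed.

End Mat.
End All.

Theorem lemma4p3
  (q : nat) (Fq : finFieldType) (hq : #|Fq| = q)
  (n : nat) (hn : (2 <= n)%N)
  (F : fieldType) (iota : {rmorphism Fq -> F})
  (m : nat) (B : 'M[Fq]_(m, n.+1)) (hB : represents_PG B)
  (L0 : {set 'I_m}) (hL0 : is_line B L0)
  (v : 'rV[F]_(n.+1)) (hv0 : v != 0)
  (hvspan : exists c : 'I_m -> F,
      v = \sum_(j in L0) c j *: row j (map_mx iota B))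
  (hvpar : forall j, j \in L0 -> forall a : F, v != a *: row j (map_mx iota B))
  (S : {set option 'I_m})
  (hS : simplification_support (PGhat_indep iota B v) (PGhat_ground m) S)
  (K : fieldType) (hK : has_proper_subfield Fq K) :
  representable_on K (PGhat_indep iota B v) S.
Proof.
case: hB => _ _ hB3.
case: hL0 => W [hW defL0].
case: hS => SE _ _ _.
case: hK => iotaK [x hx].
have vW : (v <= map_mx iota W)%MS.
  case: hvspan => c ->; apply: summx_sub => j; rewrite defL0 inE => jW.
  by apply: scalemx_sub; rewrite -map_row map_submx.
have HparF : forall r : 'rV[Fq]_(n.+1), r != 0 -> (r <= W)%MS ->
    ~~ (v <= map_mx iota r)%MS.
  move=> r nr rW; apply/negP => vr.
  have [j /andP [rj jr]] := hB3 r nr.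
  have jL : j \in L0 by rewrite defL0 inE (submx_trans jr rW).
  have : (v <= row j (map_mx iota B))%MS.
    by apply: submx_trans vr _; rewrite -map_row map_submx.
  by case/sub_rVP => a ha; move: (hvpar j jL a); rewrite ha eqxx.
pose wK : 'rV[K]_2 := \row_(i < 2) (if val i == 0%N then 1 else x).
pose uK := wK *m map_mx iotaK W.
have rfW : row_free (map_mx iotaK W) by rewrite /row_free mxrank_map hW.
have uK0 : uK != 0.
  apply/negP => /eqP h.
  have : wK = 0 by apply: (row_free_inj rfW); rewrite mul0mx.
  by move/rowP/(_ 0); rewrite !mxE /= => /eqP; rewrite oner_eq0.
have uKW : (uK <= map_mx iotaK W)%MS by exact: submxMl.
have HparK : forall r : 'rV[Fq]_(n.+1), r != 0 -> (r <= W)%MS ->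
    ~~ (uK <= map_mx iotaK r)%MS.
  move=> r nr /submxP [y ry]; apply/negP => /sub_rVP [k hk].
  have : wK = k *: map_mx iotaK y.
    apply: (row_free_inj rfW); rewrite -/uK hk ry map_mxM.
    by rewrite scalemxAl.
  move=> /rowP E; have E0 := E 0; have E1 := E 1.
  rewrite !mxE /= in E0 E1.
  have a0 : iotaK (y 0 0) != 0.
    by apply/eqP => h; move: E0; rewrite h mulr0 => /eqP; rewrite oner_eq0.
  have k0 : k = (iotaK (y 0 0))^-1.
    by apply: (mulIf a0); rewrite mulVf // -E0.
  move: (hx (y 0 1 / y 0 0)); rewrite fmorph_div E1 k0 mulrC.
  by rewrite eqxx.
exists n.+1, (fun z => Bplus iotaK B uK z *m cokermx uK).
move=> X XS.
have nX : None \notin X.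
  apply/negP => /(subsetP XS) /(subsetP SE) /imsetP [j _] //.
rewrite indep_proj // /PGhat_indep /contract.
have -> : vec_indep (Bplus iota B v) [set None] = true.
  by rewrite /vec_indep enum_set1 /= seq1_free hv0.
rewrite nX /= indep_val //.
by rewrite (core hW hv0 HparF _ vW) (core hW uK0 HparK _ uKW) !/row_free !mxrank_map.
Qed.
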